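(* Let $(f_n)\subset L^1(\mathbb{R})$ be tight and approximately Hölder continuous. Then for every $\varepsilon>0$ there exist $n_0\in\mathbb{N}$ and $\delta>0$ such that for every $n\ge n_0$ there exists $\chi\in\mathcal{T}_\delta(\mathbb{R})$ with $\|f_n-\chi\|_{L^1(\mathbb{R})}\le\varepsilon$.
   Context: Tight: for every $\varepsilon>0$ there is $R>0$ with $\int_{|x|\ge R}|f_n(x)|\,dx\le\varepsilon$ for all $n$. Approximately Hölder continuous with exponent $\alpha\in(0,1]$: there is a constant $C>0$ such that for every $\varepsilon>0$ there is $n(\varepsilon)$ with $|f_n(x)-f_n(y)|\le C|x-y|^\alpha$ whenever $|x-y|\ge\varepsilon$ and $n\ge n(\varepsilon)$. $\mathcal{T}_\delta(\mathbb{R})$ is the set of step functions $\sum_ka_k\chi_{I_k}$ with disjoint intervals $I_k$ of length (step-width) at least $\delta$. *)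

(* Defs.v *)
From HB Require Import structures.
From mathcomp Require Import all_boot all_order all_algebra.
From mathcomp Require Import all_classical all_reals all_analysis.
Set Implicit Arguments. Unset Strict Implicit. Unset Printing Implicit Defensive.
Import Order.TTheory GRing.Theory Num.Theory.
Import numFieldNormedType.Exports.
Local Open Scope classical_set_scope.
Local Open Scope ring_scope.

Definition L1_seq (R : realType) (f : nat -> R -> R) : Prop :=
  forall n, (@lebesgue_measure R).-integrable setT (fun x => (f n x)%:E).

Definition tight (R : realType) (f : nat -> R -> R) : Prop :=
  forall eps : R, 0 < eps -> exists Rr : R, 0 < Rr /\
    forall n, (\int[@lebesgue_measure R]_(x in [set x : R | (Rr <= `|x|)%R])
                 `|(f n x)%:E| <= eps%:E)%E.

Definition approx_holder (R : realType) (alpha : R) (f : nat -> R -> R) : Prop :=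
  exists C : R, 0 < C /\
    forall eps : R, 0 < eps -> exists N : nat, forall n, (N <= n)%N ->
      forall x y : R, eps <= `|x - y| ->
        `|f n x - f n y| <= C * `|x - y| `^ alpha.

Definition interval_with_ends (R : realType) (I : set R) (l r : R) : Prop :=
  l <= r /\ `]l, r[ `<=` I /\ I `<=` `[l, r] /\
  (forall x y z, I x -> I z -> x <= y -> y <= z -> I y).

Definition step_delta (R : realType) (delta : R) (chi : R -> R) : Prop :=
  exists (K : nat) (a l r : nat -> R) (I : nat -> set R),
    (forall k, (k < K)%N -> interval_with_ends (I k) (l k) (r k) /\
                            delta <= r k - l k) /\
    (forall j k, (j < K)%N -> (k < K)%N -> j <> k -> I j `&` I k = set0) /\
    (forall x, chi x = \sum_(k < K) a k * \1_(I k) x).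

(* Main.v *)
Require Import Defs.
From HB Require Import structures.
From mathcomp Require Import all_boot all_order all_algebra.
From mathcomp Require Import all_classical all_reals all_analysis.
From mathcomp Require Import ring lra.
Import Order.TTheory GRing.Theory Num.Theory.
Import numFieldNormedType.Exports.
Local Open Scope classical_set_scope.
Local Open Scope ring_scope.
Local Notation ER R := (measurable_realfun.constructive_ereal_extended__canonical__measurable_structure_SigmaRing R).

Theorem lemmaA18 (R : realType) (alpha : R) (f : nat -> R -> R) :
  0 < alpha -> alpha <= 1 ->
  L1_seq f -> tight f -> approx_holder alpha f ->
  forall eps : R, 0 < eps ->
    exists (n0 : nat) (delta : R), 0 < delta /\
      forall n, (n0 <= n)%N ->
        exists chi : R -> R, step_delta delta chi /\
          (\int[@lebesgue_measure R]_x `|(f n x - chi x)%:E| <= eps%:E)%E.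
Proof.
move=> a0 _ L1 tig [C [C0 HC]] eps eps0.
have eps20 : 0 < eps / 2 by rewrite divr_gt0.
have [Rr [Rr0 Htail]] := tig _ eps20.
pose eta := eps / (8 * C * Rr).
have eta0 : 0 < eta by rewrite /eta divr_gt0 // !mulr_gt0.
pose th := eta `^ (alpha^-1).
have th0 : 0 < th by rewrite /th powR_gt0.
pose M := (Num.trunc (4 * Rr / th)).+1.
have M0 : (0 < M)%N by [].
have M0r : 0 < M%:R :> R by rewrite ltr0n.
pose delta := 2 * Rr / M%:R.
have d0 : 0 < delta by rewrite /delta divr_gt0 // mulr_gt0.
have d2th : 2 * delta <= th.
  have h1 : 4 * Rr / th < M%:R by exact: (truncnS_gt (4 * Rr / th)).
  rewrite ltr_pdivrMr // in h1.
  have -> : 2 * delta = 4 * Rr / M%:R by rewrite /delta mulrA; congr (_ * _); ring.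
  by rewrite ler_pdivrMr // [th * _]mulrC; apply: ltW.
have powb : (2 * delta) `^ alpha <= eta.
  apply: (le_trans (y := th `^ alpha)).
    have h2 : 0 <= 2 * delta by rewrite mulr_ge0 // ltW.
    by apply: ge0_ler_powR; rewrite ?nnegrE // ltW.
  rewrite /th -powRrM mulVf ?gt_eqF // powRr1 // ltW //.
have [N HN] := HC _ d0.
exists N. exists delta. split; first by []. move=> n Nn.
pose l k := - Rr + k%:R * delta.
pose I k := [set` `[l k, l k + delta[ ].
pose chi x := \sum_(k < M) f n (l k) * \1_(I k) x.
have hI : forall k x, I k x <-> l k <= x < l k + delta.
  by move=> k x; rewrite /I /= in_itv.
have hdM : delta * M%:R = 2 * Rr by rewrite /delta divfK // gt_eqF.
have hlt : forall j k, (j < k)%N -> l j + delta <= l k.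
  move=> j k jk; have : (j%:R + 1 <= k%:R :> R) by rewrite natr1 ler_nat.
  rewrite /l => h; nra.
have hdisj : forall j k x, j <> k -> I j x -> I k x -> False.
  move=> j k x jk /hI /andP[a1 a2] /hI /andP[b1 b2].
  case: (ltngtP j k) => [jk'|jk'|jk'] //.
    by have := hlt _ _ jk'; lra.
  by have := hlt _ _ jk'; lra.
have chiv : forall k x, (k < M)%N -> I k x -> chi x = f n (l k).
  move=> k x kM Ik; rewrite /chi (bigD1 (Ordinal kM)) //= big1 ?addr0.
    by rewrite indicE mem_set // mulr1.
  move=> i /eqP ik; rewrite indicE memNset ?mulr0 // => Ii.
  apply: (hdisj i k x) => // ik'; apply: ik; exact: val_inj.
have chi0 : forall x, (forall k, (k < M)%N -> ~ I k x) -> chi x = 0.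
  move=> x Hx; rewrite /chi big1 // => i _.
  by rewrite indicE memNset ?mulr0 //; apply: Hx.
have hcov : forall x, - Rr <= x < Rr -> exists2 k, (k < M)%N & I k x.
  move=> x /andP[x1 x2].
  pose t := (x + Rr) / delta.
  have ht : t * delta = x + Rr by rewrite /t divfK // gt_eqF.
  have xr : 0 <= x + Rr by lra.
  have t0 : 0 <= t by rewrite /t divr_ge0 // ltW.
  have tk1 := truncnS_gt t.
  have tk2 : (Num.trunc t)%:R <= t by rewrite truncn_le.
  exists (Num.trunc t).
    rewrite -(ltr_nat R); apply: (le_lt_trans tk2).
    by rewrite -(ltr_pM2r d0) ht mulrC hdM; lra.
  rewrite hI /l; apply/andP; split.
    have : (Num.trunc t)%:R * delta <= t * delta by rewrite ler_pM2r.
    lra.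
  rewrite -natr1 in tk1.
  have : t * delta < ((Num.trunc t)%:R + 1) * delta by rewrite ltr_pM2r.
  lra.
have hin : forall k x, (k < M)%N -> I k x -> - Rr <= x < Rr.
  move=> k x kM /hI /andP[a1 a2]; apply/andP; split.
    have : 0 <= k%:R * delta by rewrite mulr_ge0 // ltW.
    rewrite /l in a1; lra.
  have : (k%:R + 1 <= M%:R :> R) by rewrite natr1 ler_nat.
  rewrite /l in a2 => h; nra.
exists chi; split.
  exists M, (fun k => f n (l k)), l, (fun k => l k + delta), I.
  split; last split => //.
    move=> k _; split; last by rewrite addrAC subrr add0r.
    split; first by have := d0; lra.
    split.
      by move=> x /=; rewrite !in_itv /= => /andP[h1 h2]; apply/hI; rewrite h2 ltW.
    split.
      by move=> x /hI /andP[h1 h2]; rewrite /= in_itv /= h1 ltW.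
    by move=> x y z /hI /andP[? ?] /hI /andP[? ?] ? ?; apply/hI; apply/andP; split; lra.
  by move=> j k _ _ jk; apply/seteqP; split => // x [Ij Ik]; apply: (hdisj j k x).
pose A := [set` `[- Rr, Rr[ ].
have hA : forall x, A x <-> - Rr <= x < Rr by move=> x; rewrite /A /= in_itv.
have mA : measurable A by exact: measurable_itv.
have mf : measurable_fun setT (f n).
  by apply/measurable_realfun.measurable_EFinP; exact: (measurable_int _ (L1 n)).
have mchi : measurable_fun setT chi.
  apply: measurable_sum => k; apply: measurable_realfun.measurable_funM => //.
  exact: measurable_realfun.measurable_indic (measurable_itv _).
have mh : measurable_fun [set: R] ((fun x => `|(f n x - chi x)%:E|%E) : R -> measurable_realfun.constructive_ereal_extended__canonical__measurable_structure_SigmaRing R).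
  have h1 := measurable_realfun.measurable_funB mf mchi.
  have h2 := measurableT_comp (@measurable_realfun.normr_measurable R setT) h1.
  exact: ((measurable_realfun.measurable_EFinP _ _).2 h2).
pose p := (2 * delta) `^ alpha.
have hd2 : 0 <= 2 * delta by rewrite mulr_ge0 // ltW.
pose c := 2 * C * p.
have hpt : forall x, A x -> `|f n x - chi x| <= c.
  move=> x /hA xA; have [k kM Ik] := hcov x xA.
  rewrite (chiv k x kM Ik).
  move: Ik => /hI /andP[a1 a2].
  pose z := l k + 2 * delta.
  have e1 : delta <= `|x - z| by rewrite ltr0_norm /z; lra.
  have e2 : delta <= `|z - l k| by rewrite gtr0_norm /z; lra.
  have q1 := HN n Nn x z e1.
  have q2 := HN n Nn z (l k) e2.
  have w1 : `|x - z| `^ alpha <= p.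
    apply: ge0_ler_powR; [exact: ltW | by rewrite nnegrE | by rewrite nnegrE | ].
    by rewrite ltr0_norm /z; lra.
  have w2 : `|z - l k| `^ alpha <= p.
    apply: ge0_ler_powR; [exact: ltW | by rewrite nnegrE | by rewrite nnegrE | ].
    by rewrite gtr0_norm /z; lra.
  have := ler_distD (f n z) (f n x) (f n (l k)).
  have r1 : C * `|x - z| `^ alpha <= C * p by rewrite ler_pM2l.
  have r2 : C * `|z - l k| `^ alpha <= C * p by rewrite ler_pM2l.
  rewrite /c; lra.
pose B := [set x : R | Rr <= `|x|].
have hB : B = ~` [set` `]- Rr, Rr[ ].
  apply/seteqP; split => x /=; rewrite in_itv /= -ltr_norml.
    by rewrite /B /= leNgt => /negP.
  by move/negP; rewrite -leNgt.
have mB : measurable B by rewrite hB; apply: measurableC; exact: measurable_itv.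
have CAB : ~` A `<=` B.
  move=> x /= nA; rewrite /B /= leNgt; apply/negP => hx; apply: nA; apply/hA.
  by move: hx; rewrite ltr_norml => /andP[? ?]; apply/andP; split => //; exact: ltW.
have -> : (\int[lebesgue_measure]_x `|(f n x - chi x)%:E|)%E =
    (\int[lebesgue_measure]_(x in A `|` ~` A) `|(f n x - chi x)%:E|)%E by rewrite setUv.
rewrite ge0_integral_setU //; last 3 first.
- have hh := measurableC mA; exact hh.
- by rewrite setUv; exact: mh.
- by rewrite /disj_set setICr.
have I1 : (\int[lebesgue_measure]_(x in A) `|(f n x - chi x)%:E| <= (c * (2 * Rr))%:E)%E.
  have c0 : 0 <= c by rewrite /c mulr_ge0 ?powR_ge0 // mulr_ge0 // ltW.
  have mfA : measurable_fun A ((fun x => (f n x - chi x)%:E) : R -> ER R).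
    apply/measurable_realfun.measurable_EFinP.
    exact: (measurable_funS _ (@subsetT _ A) (measurable_realfun.measurable_funB mf mchi)).
  have := @integral_le_bound _ _ R (@lebesgue_measure R) A (fun x => (f n x - chi x)%:E) (c%:E).
  move=> /(_ mA mfA) H.
  have c0' : (0 <= c%:E)%E by rewrite lee_fin.
  have hae : (\forall x \ae (@lebesgue_measure R), A x -> (`|(f n x - chi x)%:E| <= c%:E))%E.
    by apply: aeW => x Ax; rewrite lee_fin; exact: hpt.
  apply: (le_trans (H c0' hae)).
  have hl := lebesgue_measure_itv `[- Rr, Rr[. simpl in hl.
  have hl2 : ((- Rr)%:E < Rr%:E)%E by rewrite lte_fin; lra.
  rewrite hl2 in hl.
  have hl3 : lebesgue_measure A = (2 * Rr)%:E.
    apply: (eq_trans hl); rewrite -EFinD opprK; congr EFin; ring.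
  rewrite [X in (_ <= X)%E]EFinM le_eqVlt; apply/orP; left; apply/eqP; rewrite -hl3; reflexivity.
have I2 : (\int[lebesgue_measure]_(x in ~` A) `|(f n x - chi x)%:E| <= (eps / 2)%:E)%E.
  have E2 : (\int[lebesgue_measure]_(x in ~` A) `|(f n x - chi x)%:E| = \int[lebesgue_measure]_(x in ~` A) `|(f n x)%:E|)%E.
    apply: eq_integral => x /set_mem nAx; rewrite chi0 ?subr0 // => k kM Ik; apply: nAx.
    exact/hA/(hin k x kM Ik).
  rewrite E2; apply: le_trans (Htail n).
  have mfB : measurable_fun [set: R] ((fun x => `|(f n x)%:E|%E) : R -> ER R).
    have h2 := measurableT_comp (@measurable_realfun.normr_measurable R setT) mf.
    exact: ((measurable_realfun.measurable_EFinP _ _).2 h2).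
  apply: ge0_subset_integral => //.
  - have hh := measurableC mA; exact hh.
  - exact: (measurable_funS _ (@subsetT _ B) mfB).
apply: le_trans (leeD I1 I2) _.
rewrite -EFinD lee_fin.
have hpe : p <= eta := powb.
have heta : 4 * (C * Rr) * eta = eps / 2 by rewrite /eta; field; rewrite ?gt_eqF // ?mulr_gt0.
have CR0 : 0 < C * Rr by rewrite mulr_gt0.
rewrite /c; nra.
Qed.
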